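(* Given any multiple-unicast network coding problem $\mathcal{I}$ with source-destination pairs $\{ (s_i, t_i), i=1,...,k \}$, the corresponding single-source single-terminal network error correction problem $\mathcal{I}_c=(\mathcal{G},s,t,\mathcal{A})$ constructed as described below, in which $\mathcal{A}$ includes sets with at most a single edge, satisfies: rate $k$ is feasible in $\mathcal{I}_c$ if and only if unit rate is feasible in $\mathcal{I}$.
   Context: A multiple-unicast network coding problem $\mathcal{I}$ is defined on a directed network $\mathcal{N}$ of noiseless point-to-point edges (edge $e$ carries $c_e$ bits per transmission), with $k$ source-destination pairs $(s_i,t_i)$; each source $s_i$ has an independent message uniform over $[2^{nR}]$ (common rate $R$ for all sources), edges apply encoding functions of their tail node's inputs, and terminal $t_i$ decodes the message of $s_i$. Rate $R$ is feasible in $\mathcal{I}$ if for every $\epsilon>0$ there is a code (of some length $n$) under which all terminals decode correctly simultaneously with probability at least $1-\epsilon$ over the uniform messages. The single-source single-terminal network error correction problem $\mathcal{I}_c=(\mathcal{G},s,t,\mathcal{A})$ is built from $\mathcal{I}$ by embedding $\mathcal{N}$ into a larger network $\mathcal{G}$ with a new source $s$ and new terminal $t$, and $k$ parallel branches: for each $i=1,\dots,k$ there are nodes $A_i$, $B_i$ and unit-capacity edges $a_i=(s,A_i)$, $x_i=(A_i,B_i)$, $y_i=(A_i,B_i)$, $z_i=(A_i,s_i)$, $z'_i=(t_i,B_i)$, $b_i=(B_i,t)$. All edges outside $\mathcal{N}$ have unit capacity. The adversary may corrupt (xor an arbitrary error signal onto) at most one edge, which may be any edge of $\mathcal{G}$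 except $a_1,\dots,a_k,b_1,\dots,b_k$; i.e., $\mathcal{A}$ consists of all singleton sets $\{e\}$ with $e\notin\{a_i,b_i: 1\le i\le k\}$. The source message $M$ of rate $R$ is uniform over $[2^{nR}]$; a code satisfies $\mathcal{I}_c$ under message $m$ if $t$ decodes $m$ correctly under every error pattern allowed by $\mathcal{A}$, and it satisfies $\mathcal{I}_c$ with error probability $\epsilon$ if the probability (over $M$) that it satisfies $\mathcal{I}_c$ is at least $1-\epsilon$. Rate $R$ is feasible in $\mathcal{I}_c$ if for every $\epsilon>0$ such a code with error probability at most $\epsilon$ exists. *)

(* Defs.v *)
From HB Require Import structures.
From mathcomp Require Import all_boot all_order all_algebra.
Set Implicit Arguments. Unset Strict Implicit. Unset Printing Implicit Defensive.
Import Order.TTheory GRing.Theory Num.Theory.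

(* Edge e carries cap e bits per transmission, i.e. n * cap e bits in  *)
(* a code of length n.                                                  *)
Record net := Net {
  node : finType;
  edge : finType;
  tail : edge -> node;
  head : edge -> node;
  cap  : edge -> nat }.

Definition acyclic (N : net) : Prop :=
  exists rank : node N -> nat, forall e, (rank (tail e) < rank (head e))%N.

Definition word (n c : nat) := {ffun 'I_(n * c) -> bool}.
Definition zero_word (n c : nat) : word n c := [ffun=> false].
Definition xorw (n c : nat) (u v : word n c) : word n c := [ffun j => addb (u j) (v j)].

Definition assign (N : net) (n : nat) := {dffun forall e : edge N, word n (cap e)}.

Definition agree_in (N : net) (n : nat) (v : node N) (x y : assign N n) : Prop :=
  forall e : edge N, head e = v -> x e = y e.

Record mu_problem := MuProblem {
  mu_net : net;
  mu_k : nat;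
  mu_src : 'I_mu_k -> node mu_net;
  mu_dst : 'I_mu_k -> node mu_net }.
Arguments mu_src : clear implicits.
Arguments mu_dst : clear implicits.

Definition mu_msgs (P : mu_problem) (n R : nat) := {ffun 'I_(mu_k P) -> 'I_(2 ^ (n * R))}.

Record mu_code (P : mu_problem) (n R : nat) := MuCode {
  mu_enc : forall e : edge (mu_net P),
             assign (mu_net P) n -> mu_msgs P n R -> word n (cap e);
  mu_dec : 'I_(mu_k P) -> assign (mu_net P) n -> mu_msgs P n R -> 'I_(2 ^ (n * R)) }.

(* edge functions depend only on the inputs of the tail node (incoming edges
   and messages of the sources located at that node); decoders depend only on
   the inputs of the terminal node. *)
Definition mu_local (P : mu_problem) (n R : nat) (C : mu_code P n R) : Prop :=
  (forall (e : edge (mu_net P)) (x y : assign (mu_net P) n) (m m' : mu_msgs P n R),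
      agree_in (tail e) x y ->
      (forall i, mu_src P i = tail e -> m i = m' i) ->
      mu_enc C e x m = mu_enc C e y m') /\
  (forall (i : 'I_(mu_k P)) (x y : assign (mu_net P) n) (m m' : mu_msgs P n R),
      agree_in (mu_dst P i) x y ->
      (forall j, mu_src P j = mu_dst P i -> m j = m' j) ->
      mu_dec C i x m = mu_dec C i y m').

Definition mu_consistent (P : mu_problem) (n R : nat) (C : mu_code P n R)
    (m : mu_msgs P n R) (x : assign (mu_net P) n) : bool :=
  [forall e, x e == mu_enc C e x m].

Definition mu_success (P : mu_problem) (n R : nat) (C : mu_code P n R)
    (m : mu_msgs P n R) : bool :=
  [forall x, mu_consistent C m x ==> [forall i, mu_dec C i x m == m i]].

Definition mu_feasible (P : mu_problem) (R : nat) : Prop :=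
  forall eps : rat, (0 < eps)%R ->
  exists n : nat, (0 < n)%N /\
  exists C : mu_code P n R, mu_local C /\
    (1 - eps <= #|[set m : mu_msgs P n R | mu_success C m]|%:R
                / #|{: mu_msgs P n R}|%:R)%R.

Record ec_problem := EcProblem {
  ec_net : net;
  ec_s : node ec_net;
  ec_t : node ec_net;
  ec_adv : {set {set edge ec_net}} }.
Arguments ec_s : clear implicits.
Arguments ec_t : clear implicits.
Arguments ec_adv : clear implicits.

Definition ec_msg (n R : nat) := 'I_(2 ^ (n * R)).

Record ec_code (P : ec_problem) (n R : nat) := EcCode {
  ec_enc : forall e : edge (ec_net P), assign (ec_net P) n -> ec_msg n R -> word n (cap e);
  ec_dec : assign (ec_net P) n -> ec_msg n R -> ec_msg n R }.

Definition ec_local (P : ec_problem) (n R : nat) (C : ec_code P n R) : Prop :=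
  (forall (e : edge (ec_net P)) (x y : assign (ec_net P) n) (m m' : ec_msg n R),
      agree_in (tail e) x y -> (tail e = ec_s P -> m = m') ->
      ec_enc C e x m = ec_enc C e y m') /\
  (forall (x y : assign (ec_net P) n) (m m' : ec_msg n R),
      agree_in (ec_t P) x y -> (ec_t P = ec_s P -> m = m') ->
      ec_dec C x m = ec_dec C y m').

Definition err_support (N : net) (n : nat) (err : assign N n) : {set edge N} :=
  [set e | err e != zero_word n (cap e)].

Definition ec_allowed (P : ec_problem) (n : nat) (err : assign (ec_net P) n) : bool :=
  (err_support err == set0) || [exists Z in ec_adv P, err_support err \subset Z].

Arguments ec_allowed : clear implicits.

Definition ec_consistent (P : ec_problem) (n R : nat) (C : ec_code P n R)
    (m : ec_msg n R) (err x : assign (ec_net P) n) : bool :=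
  [forall e, x e == xorw (ec_enc C e x m) (err e)].

Definition ec_success (P : ec_problem) (n R : nat) (C : ec_code P n R)
    (m : ec_msg n R) : bool :=
  [forall err, ec_allowed P n err ==>
     [forall x, ec_consistent C m err x ==> (ec_dec C x m == m)]].

Definition ec_feasible (P : ec_problem) (R : nat) : Prop :=
  forall eps : rat, (0 < eps)%R ->
  exists n : nat, (0 < n)%N /\
  exists C : ec_code P n R, ec_local C /\
    (1 - eps <= #|[set m : ec_msg n R | ec_success C m]|%:R
                / #|{: ec_msg n R}|%:R)%R.

(* kinds of the new edges of branch i: a_i, x_i, y_i, z_i, z'_i, b_i *)
Definition ka  : 'I_6 := @Ordinal 6 0 isT.
Definition kx  : 'I_6 := @Ordinal 6 1 isT.
Definition ky  : 'I_6 := @Ordinal 6 2 isT.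
Definition kz  : 'I_6 := @Ordinal 6 3 isT.
Definition kz' : 'I_6 := @Ordinal 6 4 isT.
Definition kb  : 'I_6 := @Ordinal 6 5 isT.

Section Construction.
Variable P : mu_problem.
Local Notation N := (mu_net P).
Local Notation k := (mu_k P).

(* nodes of G: nodes of N, s (inl true), t (inl false), A_i, B_i *)
Definition Gnode : finType := (node N + (bool + ('I_k + 'I_k)))%type.
Definition Gs : Gnode := inr (inl true).
Definition Gt : Gnode := inr (inl false).
Definition GA (i : 'I_k) : Gnode := inr (inr (inl i)).
Definition GB (i : 'I_k) : Gnode := inr (inr (inr i)).

Definition Gedge : finType := (edge N + ('I_6 * 'I_k))%type.

Definition Gtail (e : Gedge) : Gnode :=
  match e with
  | inl e0 => inl (tail e0)
  | inr p =>
      let j := p.1 in let i := p.2 in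
      if j == ka then Gs
      else if (j == kx) || (j == ky) || (j == kz) then GA i
      else if j == kz' then inl (mu_dst P i)
      else GB i
  end.

Definition Ghead (e : Gedge) : Gnode :=
  match e with
  | inl e0 => inl (head e0)
  | inr p =>
      let j := p.1 in let i := p.2 in
      if j == ka then GA i
      else if (j == kx) || (j == ky) || (j == kz') then GB i
      else if j == kz then inl (mu_src P i)
      else Gt
  end.

Definition Gcap (e : Gedge) : nat :=
  match e with inl e0 => cap e0 | inr _ => 1 end.

Definition Gnet : net := Net Gtail Ghead Gcap.

Definition corruptible (e : Gedge) : bool :=
  match e with inl _ => true | inr p => (p.1 != ka) && (p.1 != kb) end.

Definition Ic : ec_problem :=
  @EcProblem Gnet Gs Gt [set [set e] | e : Gedge & corruptible e].

End Construction.

(* Main.v *)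
Require Import Defs.
From mathcomp Require Import all_boot all_order all_algebra.
From mathcomp Require Import zify ring lra.
Require Import Defs.
Import Order.TTheory GRing.Theory Num.Theory.
Set Implicit Arguments. Unset Strict Implicit. Unset Printing Implicit Defensive.

Definition stepf (N : net) (n : nat) (f : forall e : edge N, assign N n -> word n (cap e))
  (x : assign N n) : assign N n := finfun (fun e => f e x).

Lemma fix_unique (N : net) (n : nat) (rk : node N -> nat)
  (Hrk : forall e, rk (tail e) < rk (head e))
  (f : forall e : edge N, assign N n -> word n (cap e))
  (Hf : forall e x y, agree_in (tail e) x y -> f e x = f e y)
  (x y : assign N n) : (forall e, x e = f e x) -> (forall e, y e = f e y) -> x = y.
Proof.
move=> Hx Hy.
suff H : forall j e, rk (tail e) < j -> x e = y e.
  by apply/ffunP => e; apply: (H (rk (tail e)).+1).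
elim=> [//|j IH] e He.
rewrite Hx Hy; apply: Hf => e' He'.
apply: IH; have := Hrk e'; rewrite He'; lia.
Qed.

Lemma fix_exists (N : net) (n : nat) (rk : node N -> nat)
  (Hrk : forall e, rk (tail e) < rk (head e))
  (f : forall e : edge N, assign N n -> word n (cap e))
  (Hf : forall e x y, agree_in (tail e) x y -> f e x = f e y) (x0 : assign N n) :
  forall e, iter (\big[maxn/0%N]_(e : edge N) rk (tail e)).+1 (stepf f) x0 e
     = f e (iter (\big[maxn/0%N]_(e : edge N) rk (tail e)).+1 (stepf f) x0).
Proof.
have H : forall j e, rk (tail e) < j -> forall p,
   iter (j + p) (stepf f) x0 e = iter j (stepf f) x0 e.
  elim=> [//|j IH] e He p.
  rewrite addSn /= /stepf !ffunE; apply: Hf => e' He'.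
  apply: IH; have := Hrk e'; rewrite He'; lia.
move=> e.
have Hle : rk (tail e) < (\big[maxn/0%N]_(e : edge N) rk (tail e)).+1.
  by rewrite ltnS; exact: (@bigop.leq_bigmax _ (fun e => rk (tail e)) e).
move: Hle; set J := (\big[maxn/0%N]_(e : edge N) rk (tail e)).+1 => Hle.
have := H J e Hle 1.
rewrite addn1 iterS {1}/stepf ffunE => <-.
done.
Qed.

Lemma I6_cases (j : 'I_6) : j = ka \/ j = kx \/ j = ky \/ j = kz \/ j = kz' \/ j = kb.
Proof.
case: j => [[|[|[|[|[|[|j]]]]]] Hj]; try by [].
- by left; apply: val_inj.
- by right; left; apply: val_inj.
- by do 2 right; left; apply: val_inj.
- by do 3 right; left; apply: val_inj.
- by do 4 right; left; apply: val_inj.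
- by do 5 right; apply: val_inj.
Qed.

Definition mkA (P : mu_problem) n (xN : assign (mu_net P) n)
  (g : 'I_6 -> 'I_(mu_k P) -> word n 1) : assign (Gnet P) n :=
  finfun (fun e : Gedge P => match e as e return word n (@Gcap P e) with
     inl e0 => xN e0 | inr p => g p.1 p.2 end).

Lemma agree_Gs P n (X Y : assign (Gnet P) n) : @agree_in (Gnet P) n (Gs P) X Y.
Proof.
move=> [e0|[j i]] //=; case: (I6_cases j) => [->|[->|[->|[->|[->|->]]]]] //=.
Qed.

Lemma agree_GA P n (X Y : assign (Gnet P) n) i :
  X (inr (ka, i)) = Y (inr (ka, i)) -> @agree_in (Gnet P) n (GA i) X Y.
Proof.
move=> H [e0|[j i']] //=; case: (I6_cases j) => [->|[->|[->|[->|[->|->]]]]] //= [->] //.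
Qed.

Lemma agree_GB P n (X Y : assign (Gnet P) n) i :
  X (inr (kx, i)) = Y (inr (kx, i)) -> X (inr (ky, i)) = Y (inr (ky, i)) ->
  X (inr (kz', i)) = Y (inr (kz', i)) -> @agree_in (Gnet P) n (GB i) X Y.
Proof.
move=> H1 H2 H3 [e0|[j i']] //=; case: (I6_cases j) => [->|[->|[->|[->|[->|->]]]]] //= [->] //.
Qed.

Lemma agree_Gt P n (X Y : assign (Gnet P) n) :
  (forall i, X (inr (kb, i)) = Y (inr (kb, i))) -> @agree_in (Gnet P) n (Gt P) X Y.
Proof.
move=> H [e0|[j i']] //=; case: (I6_cases j) => [->|[->|[->|[->|[->|->]]]]] //= _; exact: H.
Qed.

Lemma agree_Gl P n (X Y : assign (Gnet P) n) v :
  (forall e0, head e0 = v -> X (inl e0) = Y (inl e0)) ->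
  (forall i, mu_src P i = v -> X (inr (kz, i)) = Y (inr (kz, i))) ->
  @agree_in (Gnet P) n (inl v) X Y.
Proof.
move=> H1 H2 [e0|[j i']] /=; first by move=> [] /H1.
case: (I6_cases j) => [->|[->|[->|[->|[->|->]]]]] //= [] /H2 //.
Qed.

Definition fbij (T U : finType) (H : #|T| = #|U|) (x : T) : U :=
  enum_val (cast_ord H (enum_rank x)).
Lemma fbijK (T U : finType) (H : #|T| = #|U|) : cancel (fbij H) (fbij (esym H)).
Proof. by move=> x; rewrite /fbij enum_valK cast_ordK enum_rankK. Qed.
Lemma fbijKV (T U : finType) (H : #|T| = #|U|) : cancel (fbij (esym H)) (fbij H).
Proof. by move=> x; rewrite /fbij enum_valK cast_ordKV enum_rankK. Qed.

Lemma xorw0 n c (u : word n c) : xorw u (zero_word n c) = u.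
Proof. by apply/ffunP => j; rewrite !ffunE addbF. Qed.
Lemma xorwK n c (u v : word n c) : xorw u (xorw u v) = v.
Proof. by apply/ffunP => j; rewrite !ffunE addKb. Qed.

Lemma card_word n : #|{: word n 1}| = 2 ^ (n * 1).
Proof. by rewrite card_ffun card_bool card_ord. Qed.
Lemma card_msgI n R : #|{: 'I_(2 ^ (n * R))}| = 2 ^ (n * R).
Proof. by rewrite card_ord. Qed.
Lemma card_mumsgs P n : #|{: mu_msgs P n 1}| = 2 ^ (n * mu_k P).
Proof. by rewrite card_ffun card_ord card_ord -expnM muln1. Qed.
Lemma card_W (k n : nat) : #|{: {ffun 'I_k -> word n 1}}| = 2 ^ (n * k).
Proof. by rewrite card_ffun card_word card_ord -expnM muln1. Qed.

Definition cbw n : #|{: 'I_(2 ^ (n * 1))}| = #|{: word n 1}| :=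
  etrans (card_msgI n 1) (esym (card_word n)).
Definition bw n : 'I_(2 ^ (n * 1)) -> word n 1 := fbij (cbw n).
Definition bwinv n : word n 1 -> 'I_(2 ^ (n * 1)) := fbij (esym (cbw n)).
Lemma bwK n : cancel (@bw n) (@bwinv n). Proof. exact: fbijK. Qed.
Lemma bwinvK n : cancel (@bwinv n) (@bw n).
Proof. exact: fbijKV. Qed.

Lemma corr_alloc P n (err : assign (Gnet P) n) e1 e2 :
  ec_allowed (Ic P) n err -> err e1 != zero_word n (cap e1) ->
  corruptible e1 /\ (e2 != e1 -> err e2 = zero_word n (cap e2)).
Proof.
rewrite /ec_allowed => Hal He1; case/orP: Hal => [/eqP H|].
  have : e1 \in err_support err by rewrite inE.
  by rewrite H inE.
case/existsP => Z /andP [] /= /imsetP [e /=]; rewrite inE => Hc -> /subsetP Hs.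
have := Hs e1; rewrite !inE => /(_ He1) /eqP E; subst e1.
split => // Hne; apply/eqP; apply: contraNT Hne => H2.
by have := Hs e2; rewrite !inE => /(_ H2).
Qed.

Definition resN P n (X : assign (Gnet P) n) : assign (mu_net P) n :=
  finfun (fun e0 => X (inl e0)).

Definition mmOf P n (X : assign (Gnet P) n) : mu_msgs P n 1 :=
  [ffun i => @bwinv n (X (inr (kz, i)))].

Definition csp P n : #|{: ec_msg n (mu_k P)}| = #|{: mu_msgs P n 1}| :=
  etrans (card_msgI n (mu_k P)) (esym (card_mumsgs P n)).
Definition sp P n : ec_msg n (mu_k P) -> mu_msgs P n 1 := fbij (csp P n).
Definition spinv P n : mu_msgs P n 1 -> ec_msg n (mu_k P) := fbij (esym (csp P n)).

Definition enc1 P n (Cm : mu_code P n 1) (e : Gedge P) (X : assign (Gnet P) n)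
   (m : ec_msg n (mu_k P)) : word n (@Gcap P e) :=
  match e as e return word n (@Gcap P e) with
  | inl e0 => mu_enc Cm e0 (resN X) (mmOf X)
  | inr p => let j := p.1 in let i := p.2 in
      if j == ka then bw (sp m i)
      else if (j == kx) || (j == ky) || (j == kz) then X (inr (ka, i))
      else if j == kz' then bw (mu_dec Cm i (resN X) (mmOf X))
      else if X (inr (kx, i)) == X (inr (ky, i)) then X (inr (kx, i))
      else X (inr (kz', i))
  end.

Definition dec1 P n (X : assign (Gnet P) n) (m : ec_msg n (mu_k P)) : ec_msg n (mu_k P) :=
  spinv [ffun i => @bwinv n (X (inr (kb, i)))].

Definition C1 P n (Cm : mu_code P n 1) : ec_code (Ic P) n (mu_k P) :=
  @EcCode (Ic P) n (mu_k P) (@enc1 P n Cm) (@dec1 P n).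

Lemma C1_local P n (Cm : mu_code P n 1) : mu_local Cm -> ec_local (C1 Cm).
Proof.
case=> Henc Hdec; split.
- move=> [e0|[j i]] X Y m m' /= Hag Hm; move: Hag; rewrite /agree_in => Hag.
  + apply: Henc.
    * move=> e0' He0'; rewrite !ffunE; apply: (Hag (inl e0')); by rewrite /= He0'.
    * move=> i Hi; rewrite !ffunE; congr bwinv; apply: (Hag (inr (kz, _))); by rewrite /= Hi.
  + case: (I6_cases j) Hag Hm => [->|[->|[->|[->|[->|->]]]]] /= Hag Hm.
    * by rewrite Hm.
    * by rewrite (Hag (inr (ka, i))).
    * by rewrite (Hag (inr (ka, i))).
    * by rewrite (Hag (inr (ka, i))).
    * congr bw; apply: Hdec.
      - move=> e0' He0'; rewrite !ffunE; apply: (Hag (inl e0')); by rewrite /= He0'.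
      - move=> i' Hi; rewrite !ffunE; congr bwinv; apply: (Hag (inr (kz, _))); by rewrite /= Hi.
    * by rewrite (Hag (inr (kx, i))) // (Hag (inr (ky, i))) // (Hag (inr (kz', i))).
- move=> X Y m m' /= Hag _; move: Hag; rewrite /agree_in => Hag; rewrite /dec1; congr spinv; apply/ffunP => i.
  by rewrite !ffunE (Hag (inr (kb, i))).
Qed.

Lemma C1_success P n (Cm : mu_code P n 1) (m : ec_msg n (mu_k P)) :
  mu_success Cm (sp m) -> ec_success (C1 Cm) m.
Proof.
move=> Hs; apply/forallP => err; apply/implyP => Hal; apply/forallP => X.
apply/implyP => /forallP Hc.
have HX e : X e = xorw (enc1 Cm e X m) (err e) by apply/eqP; exact: Hc.
have err0 (e : edge (Gnet P)) : ~~ corruptible e -> err e = zero_word n (cap e).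
  move=> Hnc; apply/eqP; apply: contraNT Hnc => Hne.
  by case: (@corr_alloc P n err e e Hal Hne).
have Ha i : X (inr (ka, i)) = bw (sp m i).
  by rewrite HX err0 // xorw0.
have Hz' i (e1 : edge (Gnet P)) : err e1 != zero_word n (cap e1) -> (forall e0, e1 != inl e0) ->
    (forall j, e1 != inr (kz, j)) -> e1 != inr (kz', i) ->
    X (inr (kz', i)) = bw (sp m i).
  move=> He1 Hn1 Hz1 Hz'1.
  have cl (e : edge (Gnet P)) : e != e1 -> err e = zero_word n (cap e).
    by move=> Hne; case: (@corr_alloc P n err e1 e Hal He1) => _ /(_ Hne).
  have Hmm : mmOf X = sp m.
    apply/ffunP => j; rewrite ffunE HX cl; last by rewrite eq_sym.
    by rewrite xorw0 /= Ha bwK.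
  rewrite HX cl; last by rewrite eq_sym.
  rewrite xorw0 /= Hmm.
  have Hcons : mu_consistent Cm (sp m) (resN X).
    apply/forallP => e0; rewrite ffunE HX cl; last by rewrite eq_sym.
    by rewrite xorw0 /= Hmm.
  have := Hs; move/forallP/(_ (resN X)); rewrite Hcons /= => /forallP/(_ i)/eqP ->.
  done.
have Hb i : X (inr (kb, i)) = bw (sp m i).
  rewrite HX err0 // xorw0 /=.
  case Ex: (err (inr (kx, i)) == zero_word n 1);
  case Ey: (err (inr (ky, i)) == zero_word n 1).
  - by rewrite HX (eqP Ex) xorw0 /= (HX (inr (ky, i))) (eqP Ey) xorw0 /= Ha; case: eqP.
  - have He1 : err (inr (ky, i)) != zero_word n (cap (inr (ky, i) : edge (Gnet P))).
      by rewrite Ey.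
    rewrite (Hz' i _ He1); [|by move=> ?|by move=> ?|by []].
    rewrite (HX (inr (kx, i))) (eqP Ex) xorw0 /= Ha.
    by case: eqP.
  - have He1 : err (inr (kx, i)) != zero_word n (cap (inr (kx, i) : edge (Gnet P))) by rewrite Ex.
    rewrite (Hz' i _ He1); [|by move=> ?|by move=> ?|by []].
    rewrite (HX (inr (ky, i))) (eqP Ey) xorw0 /= Ha.
    by case: eqP.
  - have He1 : err (inr (kx, i)) != zero_word n (cap (inr (kx, i) : edge (Gnet P))) by rewrite Ex.
    have [_ cl] := @corr_alloc P n err _ (inr (ky, i) : edge (Gnet P)) Hal He1.
    by move: Ey; rewrite cl //= => /negbT /eqP.
apply/eqP; rewrite /= /dec1.
have -> : [ffun i => @bwinv n (X (inr (kb, i)))] = sp m.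
  by apply/ffunP => i; rewrite ffunE Hb bwK.
by rewrite /spinv /sp fbijK.
Qed.

Lemma sp_bij P n : bijective (@sp P n).
Proof. exists (@spinv P n); [exact: fbijK | exact: fbijKV]. Qed.

Lemma dir1 P : mu_feasible P 1 -> ec_feasible (Ic P) (mu_k P).
Proof.
move=> H eps Heps; have [n [Hn [Cm [Hloc Hr]]]] := H eps Heps.
exists n; split=> //; exists (C1 Cm); split; first exact: C1_local.
apply: le_trans Hr _.
rewrite (csp P n); apply: ler_wpM2r; first by rewrite invr_ge0 ler0n.
rewrite ler_nat.
rewrite -(on_card_preimset (onW_bij _ (@sp_bij P n))).
apply: subset_leq_card; apply/subsetP => m; rewrite !inE => Hs.
exact: C1_success.
Qed.

Definition Grk P (rk : node (mu_net P) -> nat) (v : Gnode P) : nat :=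
  match v with
  | inl u => (rk u).+2
  | inr (inl b) => if b then 0 else (\big[maxn/0%N]_(u : node (mu_net P)) rk u).+4
  | inr (inr (inl _)) => 1
  | inr (inr (inr _)) => (\big[maxn/0%N]_(u : node (mu_net P)) rk u).+3
  end.

Lemma G_acyclic P (rk : node (mu_net P) -> nat) :
  (forall e, rk (tail e) < rk (head e)) ->
  forall e : edge (Gnet P), Grk rk (tail e) < Grk rk (head e).
Proof.
move=> Hrk [e0|[j i]] /=; first by have := Hrk e0; lia.
have Hm u : rk u <= \big[maxn/0%N]_(u : node (mu_net P)) rk u.
  exact: (@bigop.leq_bigmax _ rk u).
case: (I6_cases j) => [->|[->|[->|[->|[->|->]]]]] /=; try lia.
have := Hm (mu_dst P i); lia.
Qed.

Definition pow2_gt0 a : 0 < 2 ^ a := expn_gt0 2 a.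
Definition m0 n k : ec_msg n k := Ordinal (pow2_gt0 (n * k)).
Definition zeroN (N : net) n : assign N n := finfun (fun e0 => zero_word n (cap e0)).
Definition single P n (p : 'I_6 * 'I_(mu_k P)) (v : word n 1) : assign (Gnet P) n :=
  mkA (zeroN _ n) (fun j i => if (j, i) == p then v else zero_word n 1).

Definition Wt P n := {ffun 'I_(mu_k P) -> word n 1}.
Definition Wof P n (mm : mu_msgs P n 1) : Wt P n := [ffun i => bw (mm i)].
Definition Winv P n (w : Wt P n) : mu_msgs P n 1 := [ffun i => bwinv (w i)].
Lemma WofK P n : cancel (@Wof P n) (@Winv P n).
Proof. by move=> mm; apply/ffunP => i; rewrite !ffunE bwK. Qed.
Lemma WinvK P n : cancel (@Winv P n) (@Wof P n).
Proof. by move=> w; apply/ffunP => i; rewrite !ffunE bwinvK. Qed.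

Definition aw P n (C : ec_code (Ic P) n (mu_k P)) (m : ec_msg n (mu_k P)) : Wt P n :=
  [ffun i => ec_enc C (inr (ka, i)) (zeroN _ n) m].
Definition xv P n (C : ec_code (Ic P) n (mu_k P)) i (v : word n 1) : word n 1 :=
  ec_enc C (inr (kx, i)) (single (ka, i) v) (m0 n _).
Definition yv P n (C : ec_code (Ic P) n (mu_k P)) i (v : word n 1) : word n 1 :=
  ec_enc C (inr (ky, i)) (single (ka, i) v) (m0 n _).
Definition zv P n (C : ec_code (Ic P) n (mu_k P)) i (v : word n 1) : word n 1 :=
  ec_enc C (inr (kz, i)) (single (ka, i) v) (m0 n _).
Definition gb P n (C : ec_code (Ic P) n (mu_k P)) i (x y z : word n 1) : word n 1 :=
  ec_enc C (inr (kb, i)) (mkA (zeroN _ n) (fun j i' => if i' == i then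
     (if j == kx then x else if j == ky then y else if j == kz' then z else zero_word n 1)
     else zero_word n 1)) (m0 n _).
Definition Dd P n (C : ec_code (Ic P) n (mu_k P)) (bt : Wt P n) : ec_msg n (mu_k P) :=
  ec_dec C (mkA (zeroN _ n) (fun j i => if j == kb then bt i else zero_word n 1)) (m0 n _).
Definition liftw P n (C : ec_code (Ic P) n (mu_k P)) (x : assign (mu_net P) n) (w : Wt P n) :=
  mkA x (fun j i => if j == kz then zv C i (w i) else zero_word n 1).
Definition encN P n (C : ec_code (Ic P) n (mu_k P)) (e0 : edge (mu_net P))
   (x : assign (mu_net P) n) (mm : mu_msgs P n 1) : word n (cap e0) :=
  ec_enc C (inl e0) (liftw C x (Wof mm)) (m0 n _).
Definition consN P n (C : ec_code (Ic P) n (mu_k P)) (mm : mu_msgs P n 1)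
   (x : assign (mu_net P) n) : bool := [forall e, x e == encN C e x mm].
Definition xNfix P n (C : ec_code (Ic P) n (mu_k P)) (mm : mu_msgs P n 1) :=
  odflt (zeroN _ n) [pick x | consN C mm x].
Definition zeta P n (C : ec_code (Ic P) n (mu_k P)) i (w : Wt P n) : word n 1 :=
  ec_enc C (inr (kz', i)) (liftw C (xNfix C (Winv w)) w) (m0 n _).

Lemma mkA_l P n (xN : assign (mu_net P) n) g e0 : mkA xN g (inl e0) = xN e0.
Proof. by rewrite /mkA ffunE. Qed.
Lemma mkA_r P n (xN : assign (mu_net P) n) g j i : mkA xN g (inr (j, i)) = g j i.
Proof. by rewrite /mkA ffunE. Qed.

Lemma encN_local P n (C : ec_code (Ic P) n (mu_k P)) : ec_local C ->
  forall e0 x y (mm mm' : mu_msgs P n 1), agree_in (tail e0) x y ->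
  (forall i, mu_src P i = tail e0 -> mm i = mm' i) -> encN C e0 x mm = encN C e0 y mm'.
Proof.
move=> [HC _] e0 x y mm mm' Hag Hmm; rewrite /encN; apply: (HC (inl e0)) => //.
apply: agree_Gl => [e0' He0'|i Hi]; rewrite /liftw ?mkA_l ?mkA_r.
  exact: Hag.
by rewrite /= !ffunE Hmm.
Qed.

Lemma xNfix_eq P n (C : ec_code (Ic P) n (mu_k P)) : ec_local C -> acyclic (mu_net P) ->
  forall mm x, consN C mm x -> xNfix C mm = x.
Proof.
move=> HC [rk Hrk] mm x Hx; rewrite /xNfix; case: pickP => [x' Hx'|/(_ x)]; last by rewrite Hx.
apply: (fix_unique Hrk (f := fun e x => encN C e x mm)).
- by move=> e a b Hab; apply: encN_local.
- by move=> e; apply/eqP; move/forallP: Hx'.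
- by move=> e; apply/eqP; move/forallP: Hx.
Qed.

Lemma single_allowed P n j i v : corruptible (inr (j, i) : Gedge P) ->
  ec_allowed (Ic P) n (single (j, i) v).
Proof.
move=> Hc; apply/orP; right; apply/existsP; exists [set (inr (j, i) : Gedge P)].
apply/andP; split.
  by apply/imsetP; exists (inr (j, i)); rewrite ?inE.
apply/subsetP => -[e0|[j' i']]; rewrite !inE /single ?mkA_l ?mkA_r.
  by rewrite ffunE => /eqP.
by case: ifP => [/eqP [-> ->] _|_ /eqP //]; rewrite eqxx.
Qed.

Lemma GL P n (C : ec_code (Ic P) n (mu_k P)) : ec_local C -> acyclic (mu_net P) ->
  forall m, ec_success C m -> forall (sv : 'I_6 -> 'I_(mu_k P) -> word n 1),
  (forall i, sv ka i = zero_word n 1) -> (forall i, sv kb i = zero_word n 1) ->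
  (forall i, sv kz i = zero_word n 1) -> ec_allowed (Ic P) n (mkA (zeroN _ n) sv) ->
  Dd C [ffun jj => gb C jj
      (xorw (xv C jj (aw C m jj)) (sv kx jj))
      (xorw (yv C jj (aw C m jj)) (sv ky jj))
      (xorw (zeta C jj (aw C m)) (sv kz' jj))] = m.
Proof.
move=> HC Hac m Hm sv Hska Hskb Hskz Hal.
have Hac' := Hac; case: Hac' => rk Hrk.
set err := mkA (zeroN _ n) sv.
pose f (e : edge (Gnet P)) (X : assign (Gnet P) n) := xorw (ec_enc C e X m) (err e).
have Hf e X Y : agree_in (tail e) X Y -> f e X = f e Y.
  by move=> Hag; rewrite /f (HC.1 e X Y m m Hag).
pose X := iter (\big[maxn/0%N]_(e : edge (Gnet P)) Grk rk (tail e)).+1 (stepf f) (zeroN _ n).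
have HX e : X e = f e X := fix_exists (G_acyclic Hrk) Hf (zeroN _ n) e.
clearbody X.
have Hdec : ec_dec C X m = m.
  move/forallP: Hm => /(_ err); rewrite Hal /= => /forallP /(_ X).
  have -> : ec_consistent C m err X by apply/forallP => e; apply/eqP; exact: HX.
  by move/eqP.
have Eerr j' i' : err (inr (j', i')) = sv j' i'.
  by rewrite /err mkA_r.
have El e0 : err (inl e0) = zero_word n (cap e0).
  by rewrite /err mkA_l ffunE.
have Ha jj : X (inr (ka, jj)) = aw C m jj.
  rewrite HX /f Eerr Hska xorw0 /aw ffunE.
  by apply: (HC.1 (inr (ka, jj))) => //; exact: agree_Gs.
have Hlocx (jj : 'I_(mu_k P)) (kk : 'I_6) : (kk == kx) || (kk == ky) || (kk == kz) ->
    ec_enc C (inr (kk, jj)) X m = ec_enc C (inr (kk, jj)) (single (ka, jj) (aw C m jj)) (m0 n _).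
  move=> Hkk; have Ht : tail (inr (kk, jj) : edge (Gnet P)) = GA jj.
    by case/orP: Hkk => [/orP[]|] /eqP ->.
  apply: (HC.1 (inr (kk, jj))); rewrite Ht //.
  by apply: agree_GA; rewrite Ha /single mkA_r eqxx.
have Hx jj : X (inr (kx, jj)) = xorw (xv C jj (aw C m jj)) (sv kx jj).
  by rewrite HX /f Hlocx // Eerr.
have Hy jj : X (inr (ky, jj)) = xorw (yv C jj (aw C m jj)) (sv ky jj).
  by rewrite HX /f Hlocx // Eerr.
have Hz jj : X (inr (kz, jj)) = zv C jj (aw C m jj).
  by rewrite HX /f Hlocx // Eerr Hskz xorw0.
have HagN v0 : @agree_in (Gnet P) n (inl v0) X (liftw C (resN X) (aw C m)).
  apply: agree_Gl => [e0' _|jj _]; rewrite /liftw ?mkA_l ?mkA_r.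
    by rewrite /resN ffunE.
  by rewrite Hz eqxx.
have HN : xNfix C (Winv (aw C m)) = resN X.
  apply: xNfix_eq => //; apply/forallP => e0; apply/eqP.
  rewrite /resN ffunE HX /f El xorw0 /encN WinvK.
  by apply: (HC.1 (inl e0)) => //; exact: HagN.
have Hz' jj : X (inr (kz', jj)) = xorw (zeta C jj (aw C m)) (sv kz' jj).
  rewrite HX /f Eerr; congr xorw.
  rewrite /zeta HN.
  by apply: (HC.1 (inr (kz', jj))) => //; exact: HagN.
have Hb jj : X (inr (kb, jj)) = gb C jj (X (inr (kx, jj))) (X (inr (ky, jj))) (X (inr (kz', jj))).
  rewrite HX /f Eerr Hskb xorw0 /gb.
  apply: (HC.1 (inr (kb, jj))) => //.
  by apply: agree_GB; rewrite mkA_r /=; case: eqP.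
rewrite -[RHS]Hdec /Dd.
symmetry; apply: HC.2 => //.
apply: agree_Gt => jj; rewrite mkA_r /= ffunE Hb Hx Hy Hz'.
done.
Qed.

Definition Sset P n (C : ec_code (Ic P) n (mu_k P)) := [set m | ec_success C m].
Definition Sp P n (C : ec_code (Ic P) n (mu_k P)) := aw C @: Sset C.
Definition beta P n (C : ec_code (Ic P) n (mu_k P)) (w : Wt P n) : Wt P n :=
  [ffun jj => gb C jj (xv C jj (w jj)) (yv C jj (w jj)) (zeta C jj w)].
Definition upd P n (f : Wt P n) i (c : word n 1) : Wt P n :=
  [ffun jj => if jj == i then c else f jj].

Lemma zero_allowed P n : ec_allowed (Ic P) n (mkA (zeroN _ n) (fun _ _ => zero_word n 1)).
Proof.
apply/orP; left; apply/eqP/setP => -[e0|[j i]]; rewrite !inE ?mkA_l ?mkA_r.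
  by rewrite ffunE; apply/negbTE/negPn.
by apply/negbTE/negPn.
Qed.

Lemma GL2 P n (C : ec_code (Ic P) n (mu_k P)) : ec_local C -> acyclic (mu_net P) ->
  forall m, m \in Sset C -> let w := aw C m in
  [/\ Dd C (beta C w) = m,
      forall i x', Dd C (upd (beta C w) i (gb C i x' (yv C i (w i)) (zeta C i w))) = m,
      forall i y', Dd C (upd (beta C w) i (gb C i (xv C i (w i)) y' (zeta C i w))) = m &
      forall i z', Dd C (upd (beta C w) i (gb C i (xv C i (w i)) (yv C i (w i)) z')) = m].
Proof.
move=> HC Hac m; rewrite inE => Hm w.
have G := GL HC Hac Hm.
split.
- rewrite -[RHS](G (fun _ _ => zero_word n 1)) // ?zero_allowed //.
  by congr Dd; apply/ffunP => jj; rewrite !ffunE !xorw0.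
- move=> i x'; rewrite -[RHS](G (fun j' i' => if (j', i') == (kx, i)
      then xorw (xv C i (w i)) x' else zero_word n 1)) //;
    last by apply: single_allowed.
  congr Dd; apply/ffunP => jj; rewrite !ffunE !xpair_eqE /=.
  by case: (eqVneq jj i) => [->|Hne] /=; rewrite ?xorwK ?xorw0.
- move=> i y'; rewrite -[RHS](G (fun j' i' => if (j', i') == (ky, i)
      then xorw (yv C i (w i)) y' else zero_word n 1)) //;
    last by apply: single_allowed.
  congr Dd; apply/ffunP => jj; rewrite !ffunE !xpair_eqE /=.
  by case: (eqVneq jj i) => [->|Hne] /=; rewrite ?xorwK ?xorw0.
- move=> i z'; rewrite -[RHS](G (fun j' i' => if (j', i') == (kz', i)
      then xorw (zeta C i w) z' else zero_word n 1)) //;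
    last by apply: single_allowed.
  congr Dd; apply/ffunP => jj; rewrite !ffunE !xpair_eqE /=.
  by case: (eqVneq jj i) => [->|Hne] /=; rewrite ?xorwK ?xorw0.
Qed.

Lemma Sp_props P n (C : ec_code (Ic P) n (mu_k P)) : ec_local C -> acyclic (mu_net P) ->
  forall w, w \in Sp C -> aw C (Dd C (beta C w)) = w /\ Dd C (beta C w) \in Sset C.
Proof.
move=> HC Hac w /imsetP [m Hm ->].
by have [-> _ _ _] := GL2 HC Hac Hm.
Qed.

Lemma beta_inj P n (C : ec_code (Ic P) n (mu_k P)) : ec_local C -> acyclic (mu_net P) ->
  {in Sp C &, injective (beta C)}.
Proof.
move=> HC Hac w w' Hw Hw' E.
have [<- _] := Sp_props HC Hac Hw; have [<- _] := Sp_props HC Hac Hw'.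
by rewrite E.
Qed.

Definition bad P n (C : ec_code (Ic P) n (mu_k P)) i : {set Wt P n} :=
  [set w in Sp C | [exists c, (c != beta C w i) &&
     (Dd C (upd (beta C w) i c) == Dd C (beta C w))]].

Lemma nobad P n (C : ec_code (Ic P) n (mu_k P)) i w : w \in Sp C -> w \notin bad C i ->
  forall c, Dd C (upd (beta C w) i c) = Dd C (beta C w) -> c = beta C w i.
Proof.
move=> Hw Hb c E; apply/eqP; apply: contraNT Hb => Hc.
by rewrite inE Hw /=; apply/existsP; exists c; rewrite Hc E eqxx.
Qed.

Definition T0 P n (C : ec_code (Ic P) n (mu_k P)) : {set Wt P n} :=
  [set w in Sp C | [forall i, w \notin bad C i]].
Definition hh P n (C : ec_code (Ic P) n (mu_k P)) i (v : word n 1) : word n 1 :=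
  gb C i (xv C i v) (yv C i v) (zero_word n 1).

Lemma T0_facts P n (C : ec_code (Ic P) n (mu_k P)) : ec_local C -> acyclic (mu_net P) ->
  forall w, w \in T0 C -> forall i,
  [/\ beta C w i = hh C i (w i),
      forall x', gb C i x' (yv C i (w i)) (zeta C i w) = hh C i (w i) &
      forall y', gb C i (xv C i (w i)) y' (zeta C i w) = hh C i (w i)].
Proof.
move=> HC Hac w /setIdP [Hw /forallP Hnb] i.
have [Haw Hm] := Sp_props HC Hac Hw.
have [H0 Hx Hy Hz] := GL2 HC Hac Hm; rewrite Haw in H0 Hx Hy Hz.
have Hb : hh C i (w i) = beta C w i.
  by apply: (nobad Hw (Hnb i)); rewrite Hz.
split=> //.
- by move=> x'; rewrite Hb; apply: (nobad Hw (Hnb i)); rewrite Hx.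
- by move=> y'; rewrite Hb; apply: (nobad Hw (Hnb i)); rewrite Hy.
Qed.

Definition Cl P n (C : ec_code (Ic P) n (mu_k P)) i : {set word n 1} :=
  [set v | [exists v', (v' != v) && (hh C i v' == hh C i v)]].
Definition Tset P n (C : ec_code (Ic P) n (mu_k P)) : {set Wt P n} :=
  [set w in T0 C | [forall i, w i \notin Cl C i]].

Lemma dec_unique P n (C : ec_code (Ic P) n (mu_k P)) : ec_local C -> acyclic (mu_net P) ->
  forall i w w', w \in Tset C -> w' \in Tset C -> zeta C i w = zeta C i w' -> w i = w' i.
Proof.
move=> HC Hac i w w' /setIdP [Hw /forallP Hcl] /setIdP [Hw' _] Hz.
have [_ _ Hy] := T0_facts HC Hac Hw i.
have [_ Hx _] := T0_facts HC Hac Hw' i.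
have E : hh C i (w' i) = hh C i (w i).
  by rewrite -(Hx (xv C i (w i))) -Hz Hy.
apply/eqP; apply: contraNT (Hcl i) => Hne; rewrite inE; apply/existsP.
by exists (w' i); rewrite eq_sym Hne E eqxx.
Qed.

Lemma upd_at P n (f : Wt P n) i c : upd f i c i = c.
Proof. by rewrite /upd ffunE eqxx. Qed.

Lemma T0_Sp P n (C : ec_code (Ic P) n (mu_k P)) w : w \in T0 C -> w \in Sp C.
Proof. by case/setIdP. Qed.

Lemma beta_T0 P n (C : ec_code (Ic P) n (mu_k P)) : ec_local C -> acyclic (mu_net P) ->
  forall w, w \in T0 C -> beta C w = [ffun jj => hh C jj (w jj)].
Proof.
move=> HC Hac w Hw; apply/ffunP => jj; rewrite [RHS]ffunE.
by have [-> _ _] := T0_facts HC Hac Hw jj.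
Qed.

Lemma countA P n (C : ec_code (Ic P) n (mu_k P)) : ec_local C -> acyclic (mu_net P) ->
  forall i, #|Sp C| + #|bad C i| <= 2 ^ (n * mu_k P).
Proof.
move=> HC Hac i.
pose cw w := odflt (beta C w i) [pick c | (c != beta C w i) &&
     (Dd C (upd (beta C w) i c) == Dd C (beta C w))].
have Hcw w : w \in bad C i ->
    (cw w != beta C w i) /\ Dd C (upd (beta C w) i (cw w)) = Dd C (beta C w).
  case/setIdP => _ /existsP [c Hc]; rewrite /cw; case: pickP => [c' /andP [H1 /eqP H2]|/(_ c)] //.
  by rewrite Hc.
have bSp w : w \in bad C i -> w \in Sp C by case/setIdP.
pose b' w := upd (beta C w) i (cw w).
have DD w w' : w \in Sp C -> w' \in Sp C -> Dd C (beta C w) = Dd C (beta C w') -> w = w'.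
  move=> Hw Hw' E.
  have [<- _] := Sp_props HC Hac Hw; have [<- _] := Sp_props HC Hac Hw'.
  by rewrite E.
have inj1 : #|beta C @: Sp C| = #|Sp C| := card_in_imset (beta_inj HC Hac).
have inj2 : #|b' @: bad C i| = #|bad C i|.
  apply: card_in_imset => w w' Hw Hw' E.
  apply: (DD w w' (bSp _ Hw) (bSp _ Hw')).
  by rewrite -(Hcw w Hw).2 -(Hcw w' Hw').2 -/(b' w) -/(b' w') E.
have disj : (beta C @: Sp C) :&: (b' @: bad C i) = set0.
  apply/setP => u; rewrite !inE; apply/negbTE; apply/andP => -[/imsetP [w Hw ->] /imsetP [w' Hw' E]].
  have ww' : w = w'.
    apply: (DD w w' Hw (bSp _ Hw')).
    by rewrite E; exact: (Hcw w' Hw').2.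
  subst w'; have := congr1 (fun f : Wt P n => f i) E; rewrite /b' /= upd_at => E2.
  by move: (Hcw w Hw').1; rewrite E2 eqxx.
rewrite -inj1 -inj2 -cardsUI disj cards0 addn0 -(card_W (mu_k P) n).
exact: max_card.
Qed.

Lemma countB P n (C : ec_code (Ic P) n (mu_k P)) : ec_local C -> acyclic (mu_net P) ->
  forall i, #|[set w in T0 C | w i \in Cl C i]| <= #|~: T0 C|.
Proof.
move=> HC Hac i.
pose pv v := odflt v [pick v' | (v' != v) && (hh C i v' == hh C i v)].
have Hpv v : v \in Cl C i -> pv v != v /\ hh C i (pv v) = hh C i v.
  rewrite inE => /existsP [c Hc]; rewrite /pv; case: pickP => [c' /andP [H1 /eqP H2]|/(_ c)] //.
  by rewrite Hc.
pose phi (w : Wt P n) := upd w i (pv (w i)).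
have Hh (w : Wt P n) : w i \in Cl C i -> [ffun jj => hh C jj (phi w jj)] = [ffun jj => hh C jj (w jj)].
  move=> Hc; apply/ffunP => jj; rewrite !ffunE /phi /upd ?ffunE.
  by case: (eqVneq jj i) => [->|//]; exact: (Hpv _ Hc).2.
have Hinj : {in [set w in T0 C | w i \in Cl C i] &, injective phi}.
  move=> w w' /setIdP [Hw Hc] /setIdP [Hw' Hc'] E.
  apply: (beta_inj HC Hac); rewrite ?T0_Sp //.
  by rewrite !beta_T0 // -(Hh w Hc) -(Hh w' Hc') E.
rewrite -(card_in_imset Hinj); apply: subset_leq_card; apply/subsetP => u.
case/imsetP => w /setIdP [Hw Hc] ->; rewrite inE; apply/negP => Hphi.
have E : phi w = w.
  apply: (beta_inj HC Hac); rewrite ?T0_Sp //.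
  by rewrite !beta_T0 // Hh.
have := congr1 (fun f : Wt P n => f i) E; rewrite /phi /= upd_at => E2.
by move: (Hpv _ Hc).1; rewrite E2 eqxx.
Qed.

Definition dec2 P n (C : ec_code (Ic P) n (mu_k P)) (i : 'I_(mu_k P))
   (x : assign (mu_net P) n) (mm : mu_msgs P n 1) : 'I_(2 ^ (n * 1)) :=
  let z := ec_enc C (inr (kz', i)) (liftw C x (Wof mm)) (m0 n _) in
  match [pick w in Tset C | zeta C i w == z] with
  | Some w => bwinv (w i)
  | None => bwinv (zero_word n 1)
  end.

Definition C2 P n (C : ec_code (Ic P) n (mu_k P)) : mu_code P n 1 :=
  @MuCode P n 1 (@encN P n C) (@dec2 P n C).

Lemma C2_local P n (C : ec_code (Ic P) n (mu_k P)) : ec_local C -> mu_local (C2 C).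
Proof.
move=> HC; split; first exact: encN_local.
move=> i x y mm mm' Hag Hmm; rewrite /= /dec2.
have -> : ec_enc C (inr (kz', i)) (liftw C x (Wof mm)) (m0 n _) =
          ec_enc C (inr (kz', i)) (liftw C y (Wof mm')) (m0 n _).
  apply: (HC.1 (inr (kz', i))) => //.
  apply: agree_Gl => [e0' He0'|jj Hjj]; rewrite /liftw ?mkA_l ?mkA_r.
    exact: Hag.
  by rewrite /= !ffunE Hmm.
done.
Qed.

Lemma C2_success P n (C : ec_code (Ic P) n (mu_k P)) : ec_local C -> acyclic (mu_net P) ->
  forall mm, Wof mm \in Tset C -> mu_success (C2 C) mm.
Proof.
move=> HC Hac mm HT; apply/forallP => x; apply/implyP => Hx.
have Hfix : xNfix C mm = x by apply: xNfix_eq.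
apply/forallP => i; apply/eqP; rewrite /= /dec2.
have Hz : ec_enc C (inr (kz', i)) (liftw C x (Wof mm)) (m0 n _) = zeta C i (Wof mm).
  by rewrite /zeta WofK Hfix.
rewrite Hz; case: pickP => [w' /andP [Hw' /eqP Hzw]|/(_ (Wof mm))]; last by rewrite HT eqxx.
rewrite (dec_unique HC Hac Hw' HT Hzw) ffunE.
exact: bwK.
Qed.

Lemma card_bigcup_le (T : finType) k (B : 'I_k -> {set T}) :
  #|\bigcup_(i < k) B i| <= \sum_(i < k) #|B i|.
Proof.
apply: (big_ind2 (fun (A : {set T}) s => #|A| <= s)) => [|A a B' b Ha Hb|i _].
- by rewrite cards0.
- by rewrite cardsU; lia.
- done.
Qed.

Lemma sum_const_le k (f : 'I_k -> nat) c : (forall i, f i <= c) -> \sum_(i < k) f i <= k * c.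
Proof.
move=> H; apply: (@leq_trans (\sum_(i < k) c)); first by apply: leq_sum => i _.
by rewrite sum_nat_const card_ord.
Qed.

Lemma compl_T0 P n (C : ec_code (Ic P) n (mu_k P)) : ec_local C -> acyclic (mu_net P) ->
  #|~: T0 C| <= (mu_k P).+1 * #|~: Sp C|.
Proof.
move=> HC Hac.
have Hs : ~: T0 C \subset ~: Sp C :|: \bigcup_(i < mu_k P) bad C i.
  apply/subsetP => w; rewrite !inE negb_and => /orP [->//|/forallPn [i]].
  rewrite negbK => Hb; apply/orP; right; apply/bigcupP; exists i => //.
apply: (leq_trans (subset_leq_card Hs)); apply: (leq_trans (leq_card_setU _ _)).
rewrite mulSn leq_add2l; apply: (leq_trans (card_bigcup_le _)).
apply: sum_const_le => i; have := countA HC Hac i.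
rewrite cardsCs card_W; lia.
Qed.

Lemma compl_T P n (C : ec_code (Ic P) n (mu_k P)) : ec_local C -> acyclic (mu_net P) ->
  #|~: Tset C| <= (mu_k P).+1 * #|~: T0 C|.
Proof.
move=> HC Hac.
have Hs : ~: Tset C \subset ~: T0 C :|: \bigcup_(i < mu_k P) [set w in T0 C | w i \in Cl C i].
  apply/subsetP => w; rewrite in_setC => HwT; rewrite in_setU in_setC.
  case Hw: (w \in T0 C) => //=.
  have : ~~ [forall i, w i \notin Cl C i] by move: HwT; rewrite inE Hw.
  move/forallPn => [i]; rewrite negbK => Hc.
  by apply/bigcupP; exists i => //; rewrite inE Hw Hc.
apply: (leq_trans (subset_leq_card Hs)); apply: (leq_trans (leq_card_setU _ _)).
rewrite mulSn leq_add2l; apply: (leq_trans (card_bigcup_le _)).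
by apply: sum_const_le => i; apply: countB.
Qed.

Lemma card_Sp P n (C : ec_code (Ic P) n (mu_k P)) : ec_local C -> acyclic (mu_net P) ->
  #|Sp C| = #|Sset C|.
Proof.
move=> HC Hac; apply: card_in_imset => m m' Hm Hm' E.
have [H1 _ _ _] := GL2 HC Hac Hm; have [H2 _ _ _] := GL2 HC Hac Hm'.
by rewrite -H1 -H2 E.
Qed.

Lemma Wof_bij P n : bijective (@Wof P n).
Proof. by exists (@Winv P n); [exact: WofK | exact: WinvK]. Qed.

Lemma card_succ P n (C : ec_code (Ic P) n (mu_k P)) : ec_local C -> acyclic (mu_net P) ->
  #|Tset C| <= #|[set mm | mu_success (C2 C) mm]|.
Proof.
move=> HC Hac; rewrite -(on_card_preimset (onW_bij _ (@Wof_bij P n))).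
apply: subset_leq_card; apply/subsetP => mm HT; rewrite in_set.
rewrite in_set in HT; exact: (C2_success HC Hac HT).
Qed.

Lemma count_final P n (C : ec_code (Ic P) n (mu_k P)) : ec_local C -> acyclic (mu_net P) ->
  #|{: Wt P n}| - #|Tset C| <= (mu_k P).+1 ^ 2 * (#|{: Wt P n}| - #|Sset C|).
Proof.
move=> HC Hac.
have h1 := compl_T0 HC Hac; have h2 := compl_T HC Hac.
have e1 : #|~: Tset C| = #|{: Wt P n}| - #|Tset C|.
  by rewrite -(cardsC (Tset C)) addKn.
have e2 : #|~: Sp C| = #|{: Wt P n}| - #|Sset C|.
  by rewrite -(cardsC (Sp C)) (card_Sp HC Hac) addKn.
have A : #|{: Wt P n}| - #|Tset C| <= (mu_k P).+1 * #|~: T0 C| by rewrite -e1.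
have B : #|~: T0 C| <= (mu_k P).+1 * (#|{: Wt P n}| - #|Sset C|) by rewrite -e2.
apply: (leq_trans A); rewrite expnS expn1 -mulnA leq_mul2l B orbT //.
Qed.

Lemma arith (eps : rat) (N s T t k2 : nat) : (0 < eps)%R -> 0 < k2 -> 0 < N ->
  s <= N -> T <= t -> N - T <= k2 * (N - s) ->
  (1 - eps / k2%:R <= s%:R / N%:R)%R -> (1 - eps <= t%:R / N%:R)%R.
Proof.
move=> Heps Hk HN hS hT hC.
have HNr : (0 < N%:R :> rat)%R by rewrite ltr0n.
have Hkr : (0 < k2%:R :> rat)%R by rewrite ltr0n.
rewrite !ler_pdivlMr // !mulrBl !mul1r => Hr.
have hN : N <= t + k2 * (N - s).
  move: hT hC; generalize (k2 * (N - s)); lia.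
have hN' : (N%:R <= t%:R + k2%:R * (N%:R - s%:R) :> rat)%R.
  by rewrite -natrB // -natrM -natrD ler_nat.
have h5 : (N%:R - s%:R <= eps / k2%:R * N%:R :> rat)%R by lra.
have h6 : (k2%:R * (N%:R - s%:R) <= eps * N%:R :> rat)%R.
  have -> : (eps * N%:R = k2%:R * (eps / k2%:R * N%:R))%R by field; rewrite lt0r_neq0.
  by rewrite ler_wpM2l // ltW.
lra.
Qed.

Lemma dir2 P : acyclic (mu_net P) -> ec_feasible (Ic P) (mu_k P) -> mu_feasible P 1.
Proof.
move=> Hac H eps Heps.
have Hk : 0 < (mu_k P).+1 ^ 2 by rewrite expn_gt0.
have Hc : (0 < ((mu_k P).+1 ^ 2)%:R :> rat)%R by rewrite ltr0n.
have [n [Hn [C [HC Hr]]]] := H (eps / ((mu_k P).+1 ^ 2)%:R)%R (divr_gt0 Heps Hc).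
exists n; split => //; exists (C2 C); split; first exact: C2_local.
have eA : #|{: ec_msg n (mu_k P)}| = #|{: Wt P n}| by rewrite card_msgI card_W.
have eB : #|{: mu_msgs P n 1}| = #|{: Wt P n}| by rewrite card_mumsgs card_W.
have HN : 0 < #|{: Wt P n}| by rewrite card_W expn_gt0.
have hS : #|Sset C| <= #|{: Wt P n}| by apply: leq_trans (max_card _) (eq_leq eA).
have Hr' : (1 - eps / ((mu_k P).+1 ^ 2)%:R <= #|Sset C|%:R / #|{: Wt P n}|%:R)%R.
  by rewrite -eA.
rewrite eB.
exact: (arith Heps Hk HN hS (card_succ HC Hac) (count_final HC Hac) Hr').
Qed.

Theorem theorem1 (P : mu_problem) :
  acyclic (mu_net P) ->
  (ec_feasible (Ic P) (mu_k P) <-> mu_feasible P 1).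
Proof.
move=> Hac; split; [exact: dir2 | exact: dir1].
Qed.
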